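(* Let $\mathcal A,\mathcal B_1,\mathcal B_2$ be finite-dimensional complex Hilbert spaces and $B\in\mathcal B(\mathcal B_2\otimes\mathcal B_1,\mathcal A)$. The map $\mathcal W:\mathcal B(\mathcal A)\to\mathcal B(\mathcal B_2)$, $\mathcal W(A)=\operatorname{Tr}_{\mathcal B_1}[B^\dagger AB]$, is injective if and only if there exists an injective linear map $\mathcal V:\mathcal B(\mathcal A)\to\mathcal B(\mathcal B_2)$ such that $B(\mathcal V(A)\otimes I_{\mathcal B_1})B^\dagger=A$ for all $A\in\mathcal B(\mathcal A)$. In that case $\mathcal W(A)=\operatorname{Tr}_{\mathcal B_1}[B^\dagger B(\mathcal V(A)\otimes I_{\mathcal B_1})B^\dagger B]$ for all $A$.
   Context: $\mathcal B(\mathcal X,\mathcal Y)$ denotes the space of linear operators from $\mathcal X$ to $\mathcal Y$, and $\mathcal B(\mathcal X)=\mathcal B(\mathcal X,\mathcal X)$. $\operatorname{Tr}_{\mathcal B_1}$ denotes the partial trace over $\mathcal B_1$. *)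

(* Defs.v *)
From mathcomp Require Import all_boot all_order all_algebra.
From mathcomp Require Import complex mxtens.
From mathcomp Require Import reals.
Set Implicit Arguments. Unset Strict Implicit. Unset Printing Implicit Defensive.
Import GRing.Theory Num.Theory.
Local Open Scope ring_scope.

Definition adjmx {C : numClosedFieldType} {m n : nat} (M : 'M[C]_(m, n)) : 'M[C]_(n, m) :=
  map_mx Num.conj (M^T).

(* Partial trace over the second tensor factor: for X acting on
   C^n (x) C^k (indices (i,k) encoded by mxtens_index, the same encoding
   as the Kronecker product [*t]), ptrace2 X acts on C^n. *)
Definition ptrace2 {C : pzRingType} {n k : nat} (X : 'M[C]_(n * k)) : 'M[C]_n :=
  \matrix_(i, j) \sum_(l < k) X (mxtens_index (i, l)) (mxtens_index (j, l)).

Definition Wmap {C : numClosedFieldType} {a b1 b2 : nat}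
  (B : 'M[C]_(a, b2 * b1)) (A : 'M[C]_a) : 'M[C]_b2 :=
  ptrace2 (adjmx B *m A *m B).

(* Main.v *)
Require Import Defs.
From HB Require Import structures.
From mathcomp Require Import all_boot all_order all_algebra.
From mathcomp Require Import complex mxtens.
From mathcomp Require Import reals.
Import GRing.Theory Num.Theory.
Local Open Scope ring_scope.

Section S.
Variable C : comPzRingType.

Lemma sum_reindex2 m n (h : 'I_m * 'I_n -> 'I_(m*n))
  (hb : {on 'I_(m * n), bijective h}) (F : 'I_(m*n) -> C) :
  \sum_k F k = \sum_i \sum_j F (h (i,j)).
Proof.
rewrite (reindex h) //=; rewrite pair_big /=; apply: eq_bigr => -[i j] _ //.
Qed.

Lemma tens_sum m n (F : 'I_(m*n) -> C) :
  \sum_k F k = \sum_i \sum_j F (mxtens_index (i,j)).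
Proof.
apply: sum_reindex2; exists (@mxtens_unindex m n) => x _.
  exact: mxtens_indexK. exact: mxtens_unindexK.
Qed.

Lemma vec_sum m n (F : 'I_(m*n) -> C) :
  \sum_k F k = \sum_i \sum_j F (mxvec_index i j).
Proof. exact: (@sum_reindex2 m n _ (curry_mxvec_bij m n)). Qed.

Lemma tr_tens n k (Z : 'M[C]_(n * k)) (X : 'M[C]_n) :
  \tr (Z *m (X *t (1%:M : 'M[C]_k))) = \tr (ptrace2 Z *m X).
Proof.
rewrite /mxtrace tens_sum.
apply: eq_bigr => i _.
under eq_bigr do rewrite mxE tens_sum.
rewrite mxE; under [in RHS]eq_bigr do rewrite mxE mulr_suml.
rewrite exchange_big /=; apply: eq_bigr => j _.
apply: eq_bigr => l _.
rewrite (bigD1 l) //= big1 ?addr0.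
  by rewrite tensmxE mxE eqxx mulr1.
move=> l' /negbTE hl; by rewrite tensmxE mxE hl mulr0 mulr0.
Qed.

Lemma tr_delta n (Y : 'M[C]_n) i j : \tr (Y *m delta_mx j i) = Y i j.
Proof.
rewrite /mxtrace (bigD1 i) //= big1 ?addr0.
  rewrite mxE (bigD1 j) //= big1 ?addr0; first by rewrite mxE !eqxx mulr1.
  by move=> l /negbTE hl; rewrite mxE hl mulr0.
move=> k /negbTE hk; rewrite mxE big1 // => l _.
by rewrite mxE hk andbF mulr0.
Qed.

Lemma tr_vec n (Z : 'M[C]_n) (K : 'M[C]_(n * n)) q :
  \tr (\matrix_(i, j) K (mxvec_index j i) q *m Z) = (mxvec Z *m K) 0 q.
Proof.
rewrite /mxtrace mxE vec_sum exchange_big /=; apply: eq_bigr => i _.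
rewrite mxE; apply: eq_bigr => j _; by rewrite !mxE mxvecE mulrC.
Qed.

Section Lin.
Variables (a b1 b2 : nat) (Bl : 'M[C]_(a, b2 * b1)) (Br : 'M[C]_(b2 * b1, a)).
Definition Phi (X : 'M[C]_b2) : 'M[C]_a := Bl *m (X *t (1%:M : 'M[C]_b1)) *m Br.
Lemma Phi_is_linear : linear Phi.
Proof.
move=> c u v; rewrite /Phi.
have -> : (c *: u + v) *t (1%:M : 'M[C]_b1) = c *: (u *t 1%:M) + v *t 1%:M.
  by apply/matrixP => p q; rewrite !mxE mulrDl mulrA.
by rewrite mulmxDr mulmxDl -scalemxAr -scalemxAl.
Qed.
HB.instance Definition _ := GRing.isLinear.Build C 'M[C]_b2 'M[C]_a _ Phi Phi_is_linear.

Variable P : 'M[C]_(a * a, b2 * b2).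
Definition Vf (A : 'M[C]_a) : 'M[C]_b2 := vec_mx (mxvec A *m P).
Lemma Vf_is_linear : linear Vf.
Proof. by move=> c u v; rewrite /Vf linearP mulmxDl -scalemxAl linearP. Qed.
HB.instance Definition _ := GRing.isLinear.Build C 'M[C]_a 'M[C]_b2 _ Vf Vf_is_linear.
End Lin.
End S.

Lemma tr0_eq0 (C : comPzRingType) n (Z : 'M[C]_n) :
  (forall X, \tr (Z *m X) = 0) -> Z = 0.
Proof.
move=> h; apply/matrixP => i j; rewrite mxE -(@tr_delta C n Z i j); exact: h.
Qed.

Theorem corollary2 (R : realType) (a b1 b2 : nat) (B : 'M[R[i]]_(a, b2 * b1)) :
  (injective (Wmap B) <->
     exists V : {linear 'M[R[i]]_a -> 'M[R[i]]_b2},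
       injective V /\
       (forall A : 'M[R[i]]_a, B *m (V A *t (1%:M : 'M[R[i]]_b1)) *m adjmx B = A))
  /\
  (forall V : {linear 'M[R[i]]_a -> 'M[R[i]]_b2},
     injective V ->
     (forall A : 'M[R[i]]_a, B *m (V A *t (1%:M : 'M[R[i]]_b1)) *m adjmx B = A) ->
     forall A : 'M[R[i]]_a,
       Wmap B A =
       ptrace2 (adjmx B *m B *m (V A *t (1%:M : 'M[R[i]]_b1)) *m adjmx B *m B)).
Proof.
set C := R[i].
have duality : forall (Y : 'M[C]_a) (X : 'M[C]_b2),
    \tr (Y *m @Phi _ a b1 b2 B (adjmx B) X) = \tr (Wmap B Y *m X).
  by move=> Y X; rewrite /Phi /Wmap -tr_tens !mulmxA mxtrace_mulC !mulmxA.
have Wlin : forall Y1 Y2 : 'M[C]_a, Wmap B (Y1 - Y2) = Wmap B Y1 - Wmap B Y2.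
  move=> Y1 Y2; rewrite /Wmap mulmxBr mulmxBl; apply/matrixP => p q.
  by rewrite !mxE -sumrB; apply: eq_bigr => l _; rewrite !mxE.
split; last first.
  move=> V _ HV A; rewrite /Wmap -{1}(HV A); congr ptrace2; by rewrite !mulmxA.
split.
- move=> Winj.
  pose M := lin_mx (@Phi _ a b1 b2 B (adjmx B)).
  have full : row_full M.
    rewrite -cokermx_eq0; apply/eqP/matrixP => p q.
    set K := cokermx M.
    have MK : M *m K = 0 by exact: mulmx_coker.
    pose Y : 'M[C]_a := \matrix_(i, j) K (mxvec_index j i) q.
    have Y0 : Y = 0.
      apply: Winj; have -> : Wmap B 0 = 0 by rewrite /Wmap mulmx0 mul0mx; apply/matrixP=> x y; rewrite !mxE big1 // => l _; rewrite mxE.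
      apply: tr0_eq0 => X; rewrite -duality tr_vec -mul_vec_lin -mulmxA MK mulmx0 mxE //.
    case/mxvec_indexP: p => i j.
    by rewrite mxE; move/matrixP: Y0 => /(_ j i); rewrite !mxE.
  exists (@Vf _ a b2 (pinvmx M)); split.
    move=> A1 A2 h.
    suff e : forall A, @Phi _ a b1 b2 B (adjmx B) (@Vf _ a b2 (pinvmx M) A) = A by rewrite -(e A1) h e.
    move=> A; rewrite -[LHS]mxvecK -mul_vec_lin /Vf vec_mxK mulmxKpV ?mxvecK //.
    exact: submx_full.
  move=> A; rewrite -[LHS]mxvecK.
  have -> : B *m (@Vf _ a b2 (pinvmx M) A *t 1%:M) *m adjmx B = @Phi _ a b1 b2 B (adjmx B) (@Vf _ a b2 (pinvmx M) A) by [].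
  rewrite -mul_vec_lin /Vf vec_mxK mulmxKpV ?mxvecK //; exact: submx_full.
- case=> V [_ HV] Y1 Y2 h.
  apply/eqP; rewrite -subr_eq0; apply/eqP; apply: tr0_eq0 => A.
  have -> : A = @Phi _ a b1 b2 B (adjmx B) (V A) by rewrite /Phi HV.
  by rewrite duality Wlin h subrr mul0mx mxtrace0.
Qed.
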